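(* Let $\gamma>0$ and $0<\alpha<1$. For $j\in\mathbb{Z}_{\ge0}$ let $F_j={}_2F_1(\gamma,j\gamma;1+j\gamma;\alpha)$, and define $$g(x)=\sum_{l=0}^{\infty}\frac{(-x)^l}{l!}\,\frac{1}{\prod_{j=0}^{l}F_j}.$$ Then $g$ is an entire function of $x$.
   Context: ${}_2F_1$ denotes the Gauss hypergeometric function. Note $F_0=1$. *)

(* Defs.v *)
From Stdlib Require Import Reals Arith.
From Coquelicot Require Import Coquelicot.
Open Scope R_scope.

Fixpoint poch (a : R) (n : nat) : R :=
  match n with
  | O => 1
  | S m => poch a m * (a + INR m)
  end.

Definition hyp2F1 (a b c z : R) : R :=
  Series (fun n => poch a n * poch b n / (poch c n * INR (Factorial.fact n)) * z ^ n).

Definition Fj (gamma alpha : R) (j : nat) : R :=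
  hyp2F1 gamma (INR j * gamma) (1 + INR j * gamma) alpha.

Fixpoint prodF (gamma alpha : R) (l : nat) : R :=
  match l with
  | O => Fj gamma alpha 0
  | S m => prodF gamma alpha m * Fj gamma alpha (S m)
  end.

Definition g_coef (gamma alpha : R) (l : nat) : R :=
  (-1) ^ l / (INR (Factorial.fact l) * prodF gamma alpha l).

(* Main.v *)
Require Import Defs.
From Stdlib Require Import Reals Arith Lra.
From Coquelicot Require Import Coquelicot.
Open Scope R_scope.

Lemma poch_le (a c : R) (n : nat) : 0 <= a <= c -> 0 <= poch a n <= poch c n.
Proof.
  intros H; induction n as [|n IH]; simpl; [lra|].
  pose proof (pos_INR n).
  split; [apply Rmult_le_pos; lra|].
  apply Rmult_le_compat; lra.
Qed.

Lemma poch_pos (a : R) (n : nat) : 0 < a -> 0 < poch a n.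
Proof.
  intros H; induction n as [|n IH]; simpl; [lra|].
  pose proof (pos_INR n). apply Rmult_lt_0_compat; lra.
Qed.

Lemma INR_fact_pos n : 0 < INR (Factorial.fact n).
Proof. apply lt_0_INR, Factorial.lt_O_fact. Qed.

Lemma lim_inv_S : is_lim_seq (fun n => / (INR n + 1)) 0.
Proof.
  replace (Finite 0) with (Rbar_inv p_infty) by reflexivity.
  apply is_lim_seq_inv; [|discriminate].
  eapply is_lim_seq_plus; [apply is_lim_seq_INR| apply is_lim_seq_const|].
  reflexivity.
Qed.

Lemma u_series (gamma alpha : R) : 0 < gamma -> 0 < alpha -> alpha < 1 ->
  ex_series (fun n => poch gamma n / INR (Factorial.fact n) * alpha ^ n).
Proof.
  intros hg ha0 ha1.
  assert (Hp : forall n, 0 < poch gamma n / INR (Factorial.fact n) * alpha ^ n).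
  { intro n. apply Rmult_lt_0_compat; [apply Rdiv_lt_0_compat|apply pow_lt];
      auto using poch_pos, INR_fact_pos. }
  assert (H := ex_series_DAlembert (fun n => poch gamma n / INR (Factorial.fact n) * alpha ^ n) alpha ha1).
  eapply ex_series_ext; [|apply H].
  - intro n; simpl. apply Rabs_pos_eq. apply Rlt_le, Hp.
  - intro n. apply Rgt_not_eq, Hp.
  - apply is_lim_seq_ext with (fun n => alpha * (1 + (gamma - 1) * / (INR n + 1))).
    + intro n. rewrite Rabs_pos_eq.
      2:{ apply Rlt_le, Rdiv_lt_0_compat; apply Hp. }
      pose proof (poch_pos gamma n hg). pose proof (INR_fact_pos n).
      pose proof (pos_INR n).
      simpl poch. change (Factorial.fact (S n)) with (S n * Factorial.fact n)%nat; rewrite mult_INR, S_INR. simpl pow.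
      field. repeat split; try lra. apply Rgt_not_eq, pow_lt; lra.
    + replace (Finite alpha) with (Rbar_mult alpha (1 + (gamma - 1) * 0)) by (simpl; f_equal; ring).
      apply is_lim_seq_scal_l. apply is_lim_seq_plus'; [apply is_lim_seq_const|].
      replace (Finite ((gamma - 1) * 0)) with (Rbar_mult (gamma - 1) 0) by (simpl; f_equal; ring).
      apply is_lim_seq_scal_l. apply lim_inv_S.
Qed.

Lemma Fj_ge1 (gamma alpha : R) (j : nat) : 0 < gamma -> 0 < alpha -> alpha < 1 ->
  1 <= Fj gamma alpha j.
Proof.
  intros hg ha0 ha1. unfold Fj, hyp2F1.
  set (b := INR j * gamma).
  assert (hb : 0 <= b) by (unfold b; apply Rmult_le_pos; [apply pos_INR|lra]).
  set (t := fun n => poch gamma n * poch b n / (poch (1 + b) n * INR (Factorial.fact n)) * alpha ^ n).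
  assert (Ht : forall n, 0 <= t n <= poch gamma n / INR (Factorial.fact n) * alpha ^ n).
  { intro n. unfold t.
    pose proof (poch_pos gamma n hg). pose proof (INR_fact_pos n).
    pose proof (poch_pos (1 + b) n ltac:(lra)).
    pose proof (poch_le b (1 + b) n ltac:(lra)).
    pose proof (pow_lt alpha n ha0).
    split.
    - apply Rmult_le_pos; [|lra]. apply Rdiv_le_0_compat; [apply Rmult_le_pos; lra|].
      apply Rmult_lt_0_compat; lra.
    - apply Rmult_le_compat_r; [lra|].
      unfold Rdiv. rewrite Rinv_mult.
      replace (poch gamma n * poch b n * (/ poch (1 + b) n * / INR (Factorial.fact n)))
        with ((poch gamma n * / INR (Factorial.fact n)) * (poch b n / poch (1 + b) n)) by (unfold Rdiv; ring).
      rewrite <- (Rmult_1_r (poch gamma n * / INR (Factorial.fact n))) at 2.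
      apply Rmult_le_compat_l.
      + apply Rlt_le, Rdiv_lt_0_compat; lra.
      + apply (Rmult_le_reg_r (poch (1 + b) n)); [lra|].
        unfold Rdiv; rewrite Rmult_assoc, Rinv_l; lra. }
  assert (Hex : ex_series t).
  { apply (ex_series_le (K:=R_AbsRing) (V:=R_CompleteNormedModule) t (fun n => poch gamma n / INR (Factorial.fact n) * alpha ^ n)); [|apply (u_series gamma alpha hg ha0 ha1)].
    intro n. change norm with Rabs; simpl. rewrite Rabs_pos_eq; apply Ht. }
  change (1 <= Series t).
  rewrite Series_incr_1 by exact Hex.
  assert (t 0%nat = 1) as -> by (unfold t; simpl; field).
  assert (0 <= Series (fun k => t (S k))).
  { replace 0 with (Series (fun k => 0 * t (S k))) by (rewrite Series_scal_l; ring).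
    apply Series_le; [intro n; rewrite Rmult_0_l; split; [lra|apply Ht]|].
    apply (proj1 (ex_series_incr_1 t)), Hex. }
  lra.
Qed.

Lemma prodF_pos gamma alpha l : 0 < gamma -> 0 < alpha -> alpha < 1 -> 0 < prodF gamma alpha l.
Proof.
  intros; induction l; simpl.
  - pose proof (Fj_ge1 gamma alpha 0 H H0 H1); lra.
  - pose proof (Fj_ge1 gamma alpha (S l) H H0 H1); apply Rmult_lt_0_compat; lra.
Qed.

Theorem mainTheorem7 (gamma alpha : R) (hg : 0 < gamma) (ha0 : 0 < alpha) (ha1 : alpha < 1) :
  CV_radius (g_coef gamma alpha) = p_infty.
Proof.
  apply CV_radius_infinite_DAlembert.
  - intro n. unfold g_coef. pose proof (prodF_pos gamma alpha n hg ha0 ha1).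
    pose proof (INR_fact_pos n).
    unfold Rdiv. apply Rmult_integral_contrapositive_currified; [apply pow_nonzero; lra|].
    apply Rinv_neq_0_compat, Rgt_not_eq, Rmult_lt_0_compat; lra.
  - apply is_lim_seq_le_le with (fun _ => 0) (fun n => / (INR n + 1));
      [|apply is_lim_seq_const|apply lim_inv_S].
    intro n. unfold g_coef.
    pose proof (prodF_pos gamma alpha n hg ha0 ha1).
    pose proof (INR_fact_pos n). pose proof (pos_INR n).
    pose proof (Fj_ge1 gamma alpha (S n) hg ha0 ha1).
    simpl prodF. change (Factorial.fact (S n)) with (S n * Factorial.fact n)%nat.
    rewrite mult_INR, S_INR.
    assert (Hn : (-1) ^ n <> 0) by (apply pow_nonzero; lra).
    replace ((-1) ^ S n / ((INR n + 1) * INR (Factorial.fact n) * (prodF gamma alpha n * Fj gamma alpha (S n))) /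
      ((-1) ^ n / (INR (Factorial.fact n) * prodF gamma alpha n)))
      with (- / ((INR n + 1) * Fj gamma alpha (S n))) by (simpl; field; repeat split; lra).
    rewrite Rabs_Ropp, Rabs_pos_eq.
    2:{ apply Rlt_le, Rinv_0_lt_compat, Rmult_lt_0_compat; lra. }
    split; [apply Rlt_le, Rinv_0_lt_compat, Rmult_lt_0_compat; lra|].
    apply Rinv_le_contravar; [lra|].
    rewrite <- (Rmult_1_r (INR n + 1)) at 1. apply Rmult_le_compat_l; lra.
Qed.
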